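(* Let $A\in\mathbb{C}^{m\times n}$. Then the following are equivalent: (1) $A^{\mathfrak{m}}$ exists; (2) $\mathrm{rank}(AA^{\sim})=\mathrm{rank}(A^{\sim}A)=\mathrm{rank}(A)$; (3) $\mathrm{rank}(A^{\sim}AA^{\sim})=\mathrm{rank}(A)$; (4) $A\mathcal{R}(A^{\sim})\oplus\mathcal{N}(A^{\sim})=\mathbb{C}^m$.
   Context: For a positive integer $k$, the Minkowski metric matrix of order $k$ is $G_k=\mathrm{diag}(1,-I_{k-1})$ (with $G_1=(1)$). For $A\in\mathbb{C}^{m\times n}$, the Minkowski adjoint is $A^{\sim}=G_nA^*G_m$, where $A^*$ is the conjugate transpose. The Minkowski inverse of $A$, denoted $A^{\mathfrak{m}}$, is a matrix $X\in\mathbb{C}^{n\times m}$ with $AXA=A$, $XAX=X$, $(AX)^{\sim}=AX$, $(XA)^{\sim}=XA$ (unique if it exists). $\mathcal{R}(\cdot)$, $\mathcal{N}(\cdot)$ denote range and null space, and $A\mathcal{R}(A^{\sim})=\{Av: v\in\mathcal{R}(A^{\sim})\}$. *)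

(* Defs.v *)
From HB Require Import structures.
From mathcomp Require Import all_boot all_order all_algebra.
From mathcomp Require Import reals.
From mathcomp.real_closed Require Import complex.
Set Implicit Arguments. Unset Strict Implicit. Unset Printing Implicit Defensive.
Import Order.TTheory GRing.Theory Num.Theory.
Local Open Scope ring_scope.

Section Minkowski.
Variable C : numClosedFieldType.

Definition mink_metric (k : nat) : 'M[C]_k :=
  \matrix_(i < k, j < k)
    (if i == j then (if (i : nat) == 0%N then 1 else -1) else 0).

Definition conjtr (m n : nat) (A : 'M[C]_(m, n)) : 'M[C]_(n, m) :=
  map_mx Num.conj (A^T).

Definition madj (m n : nat) (A : 'M[C]_(m, n)) : 'M[C]_(n, m) :=
  mink_metric n *m conjtr A *m mink_metric m.

Definition is_minkowski_inverse (m n : nat) (A : 'M[C]_(m, n))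
    (X : 'M[C]_(n, m)) : Prop :=
  [/\ A *m X *m A = A, X *m A *m X = X,
      madj (A *m X) = A *m X & madj (X *m A) = X *m A].

Definition range_of (p q : nat) (B : 'M[C]_(p, q)) (y : 'cV[C]_p) : Prop :=
  exists w : 'cV[C]_q, y = B *m w.

Definition null_of (p q : nat) (B : 'M[C]_(p, q)) (x : 'cV[C]_q) : Prop :=
  B *m x = 0.

Definition image_of_range (m n : nat) (A : 'M[C]_(m, n)) (y : 'cV[C]_m) : Prop :=
  exists v : 'cV[C]_n, range_of (madj A) v /\ y = A *m v.

Definition direct_sum_whole (p : nat) (S T : 'cV[C]_p -> Prop) : Prop :=
  (forall x : 'cV[C]_p, exists u v, S u /\ T v /\ x = u + v) /\
  (forall x : 'cV[C]_p, S x -> T x -> x = 0).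

End Minkowski.

(* Main.v *)
Require Import Defs.
From HB Require Import structures.
From mathcomp Require Import all_boot all_order all_algebra.
From mathcomp Require Import reals.
From mathcomp.real_closed Require Import complex.
Import Order.TTheory GRing.Theory Num.Theory.
Local Open Scope ring_scope.
Set Implicit Arguments. Unset Strict Implicit.

Section Gen.
Variable C : numClosedFieldType.

Lemma GG k : mink_metric C k *m mink_metric C k = 1%:M.
Proof.
apply/matrixP=> i j; rewrite /mink_metric !mxE (bigD1 i) //= big1.
  rewrite !mxE eqxx addr0; have [_|nij] := eqVneq i j.
    by case: ifP => _; rewrite ?mulr1 ?mulrNN ?mulr1.
  by rewrite mulr0.
by move=> l /negbTE nl; rewrite !mxE eq_sym nl mul0r.
Qed.

Lemma conjtrM m n p (A : 'M[C]_(m, n)) (B : 'M[C]_(n, p)) :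
  conjtr (A *m B) = conjtr B *m conjtr A.
Proof. by rewrite /conjtr trmx_mul map_mxM. Qed.

Lemma conjtrK m n (A : 'M[C]_(m, n)) : conjtr (conjtr A) = A.
Proof. by apply/matrixP=> i j; rewrite !mxE conjCK. Qed.

Lemma conjtrG k : conjtr (mink_metric C k) = mink_metric C k.
Proof.
apply/matrixP=> i j; rewrite /conjtr /mink_metric !mxE.
case: (i =P j) => [->|/eqP ne]; first by rewrite eqxx; case: ifP; rewrite ?rmorphN rmorph1.
by rewrite eq_sym (negbTE ne) rmorph0.
Qed.

Lemma madjM m n p (A : 'M[C]_(m, n)) (B : 'M[C]_(n, p)) :
  madj (A *m B) = madj B *m madj A.
Proof.
rewrite /madj conjtrM !mulmxA -[_ *m mink_metric C n *m mink_metric C n]mulmxA GG.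
by rewrite mulmx1.
Qed.

Lemma madjK m n (A : 'M[C]_(m, n)) : madj (madj A) = A.
Proof.
rewrite /madj !conjtrM !conjtrG conjtrK !mulmxA GG mul1mx -mulmxA GG.
by rewrite mulmx1.
Qed.

Lemma rank_madj_le m n (A : 'M[C]_(m, n)) : (\rank (madj A) <= \rank A)%N.
Proof.
rewrite /madj; apply: leq_trans (mxrankM_maxl _ _) _.
apply: leq_trans (mxrankM_maxr _ _) _.
by rewrite /conjtr mxrank_map mxrank_tr.
Qed.

Lemma rank_madj m n (A : 'M[C]_(m, n)) : \rank (madj A) = \rank A.
Proof.
apply/eqP; rewrite eqn_leq rank_madj_le /=.
by rewrite -{1}(madjK A) rank_madj_le.
Qed.

Lemma row_eq (F : fieldType) m n p (A : 'M[F]_(m, n)) (B : 'M[F]_(p, m)) :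
  \rank (B *m A) = \rank A -> exists W : 'M[F]_(m, p), A = W *m B *m A.
Proof.
move=> hr.
have sub : (B *m A <= A)%MS by apply: submxMl.
have := eq_leqif (mxrank_leqif_sup sub). rewrite hr eqxx => h.
have /submxP[D hD] : (A <= B *m A)%MS by rewrite -h.
by exists D; rewrite -mulmxA -hD.
Qed.

Lemma col_eq (F : fieldType) m n p (A : 'M[F]_(m, n)) (B : 'M[F]_(n, p)) :
  \rank (A *m B) = \rank A -> exists W : 'M[F]_(p, n), A = A *m B *m W.
Proof.
move=> hr.
have hr' : \rank (B^T *m A^T) = \rank A^T by rewrite -trmx_mul !mxrank_tr.
have [W hW] := row_eq hr'.
exists W^T; apply: (can_inj (@trmxK _ _ _)).
by rewrite !trmx_mul trmxK {1}hW mulmxA.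
Qed.

Section Main.
Variables (m n : nat) (A : 'M[C]_(m, n)) (B : 'M[C]_(n, m)).
Hypothesis hB : madj A = B.

Lemma hB' : madj B = A.
Proof. by rewrite -hB madjK. Qed.

Lemma rankB : \rank B = \rank A.
Proof. by rewrite -hB rank_madj. Qed.

Lemma L12 : (exists X, is_minkowski_inverse A X) ->
  \rank (A *m B) = \rank A /\ \rank (B *m A) = \rank A.
Proof.
case=> X [h1 h2 h3 h4]; split; apply/eqP; rewrite eqn_leq ?mxrankM_maxl ?mxrankM_maxr /=.
  have e : A = A *m B *m madj X.
    by rewrite -hB -mulmxA -madjM h4 mulmxA h1.
  by rewrite {1}e mxrankM_maxl.
have e : A = madj X *m B *m A.
  by rewrite -hB -madjM h3 h1.
by rewrite {1}e -mulmxA mxrankM_maxr.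
Qed.

Lemma L23 : \rank (A *m B) = \rank A /\ \rank (B *m A) = \rank A ->
  \rank (B *m A *m B) = \rank A.
Proof.
case=> r1 r2; have [W e] := row_eq r2.
apply/eqP; rewrite eqn_leq; apply/andP; split.
  by rewrite -mulmxA -r1 mxrankM_maxr.
have e' : A *m B = W *m (B *m A *m B) by rewrite !mulmxA -e.
by rewrite -{1}r1 e' mxrankM_maxr.
Qed.

Lemma L32 : \rank (B *m A *m B) = \rank A ->
  \rank (A *m B) = \rank A /\ \rank (B *m A) = \rank A.
Proof.
move=> r; split; apply/eqP; rewrite eqn_leq ?mxrankM_maxl ?mxrankM_maxr /=.
  by rewrite -{1}r -mulmxA mxrankM_maxr.
by rewrite -{1}r mxrankM_maxl.
Qed.

Lemma L21 : \rank (A *m B) = \rank A /\ \rank (B *m A) = \rank A ->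
  exists X, is_minkowski_inverse A X.
Proof.
move=> r; have r3 := L23 r; case: r => r1 r2.
have [W1 e1] := col_eq r1.
have [W2 e2] := row_eq r2.
have r3a : \rank (B *m (A *m B)) = \rank B by rewrite mulmxA r3 rankB.
have [U e3] := col_eq r3a.
have r3b : \rank (B *m A *m B) = \rank B by rewrite r3 rankB.
have [V e4] := row_eq r3b.
rewrite !mulmxA in e3 e4.
set Y := pinvmx (B *m A *m B).
have H : B *m A *m B *m Y *m (B *m A *m B) = B *m A *m B.
  by rewrite mulmxKpV.
set X := B *m Y *m B.
have i1 : A *m X *m A = A.
  have -> : A *m X *m A = (W2 *m B *m A) *m B *m Y *m B *m (A *m B *m W1).
    by rewrite -e2 -e1 /X !mulmxA.
  have -> : W2 *m B *m A *m B *m Y *m B *m (A *m B *m W1) =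
     W2 *m (B *m A *m B *m Y *m (B *m A *m B)) *m W1 by rewrite !mulmxA.
  rewrite H.
  have -> : W2 *m (B *m A *m B) *m W1 = (W2 *m B *m A) *m (B *m W1) by rewrite !mulmxA.
  by rewrite -e2 mulmxA -e1.
have i2 : X *m A *m X = X.
  have eV : X = V *m (B *m A *m B) *m U.
    have -> : X = V *m B *m A *m B *m Y *m (B *m A *m B *m U) by rewrite -e4 -e3.
    have -> : V *m B *m A *m B *m Y *m (B *m A *m B *m U) =
       V *m (B *m A *m B *m Y *m (B *m A *m B)) *m U by rewrite !mulmxA.
    by rewrite H !mulmxA.
  have -> : X *m A *m X = V *m B *m A *m B *m Y *m B *m A *m B *m Y *m (B *m A *m B *m U).
    by rewrite -e4 -e3 /X !mulmxA.
  have -> : V *m B *m A *m B *m Y *m B *m A *m B *m Y *m (B *m A *m B *m U) =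
     V *m (B *m A *m B *m Y *m (B *m A *m B)) *m Y *m (B *m A *m B) *m U by rewrite !mulmxA.
  rewrite H.
  have -> : V *m (B *m A *m B) *m Y *m (B *m A *m B) *m U =
     V *m (B *m A *m B *m Y *m (B *m A *m B)) *m U by rewrite !mulmxA.
  by rewrite H eV.
have bp : B *m (A *m X) = B.
  have -> : B *m (A *m X) = B *m A *m B *m Y *m (B *m A *m B *m U) by rewrite -e3 /X !mulmxA.
  have -> : B *m A *m B *m Y *m (B *m A *m B *m U) = (B *m A *m B *m Y *m (B *m A *m B)) *m U by rewrite !mulmxA.
  by rewrite H -e3.
have pb : X *m A *m B = B.
  have -> : X *m A *m B = (V *m B *m A *m B) *m Y *m B *m A *m B by rewrite -e4 /X !mulmxA.
  have -> : V *m B *m A *m B *m Y *m B *m A *m B = V *m (B *m A *m B *m Y *m (B *m A *m B)) by rewrite !mulmxA.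
  by rewrite H !mulmxA -e4.
exists X; split => //.
  have q1 : madj (A *m X) = madj X *m B by rewrite madjM hB.
  have q2 : madj (A *m X) *m A = A by rewrite -{2}hB' -madjM bp hB'.
  apply: (@etrans _ _ (madj (A *m X) *m (A *m X))).
    by rewrite {2}q1 -mulmxA bp -q1.
  by rewrite (mulmxA (madj (A *m X)) A X) q2.
have q1 : madj (X *m A) = B *m madj X by rewrite madjM hB.
have q2 : A *m madj (X *m A) = A by rewrite -{1}hB' -madjM pb hB'.
apply: (@etrans _ _ ((X *m A) *m madj (X *m A))).
  by rewrite {2}q1 (mulmxA (X *m A) B (madj X)) pb -q1.
by rewrite -(mulmxA X A) q2.
Qed.


Lemma L14 : (exists X, is_minkowski_inverse A X) ->
  direct_sum_whole (image_of_range A) (null_of (madj A)).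
Proof.
case=> X [h1 h2 h3 h4]; rewrite hB; split.
  move=> x; exists (A *m X *m x), (x - A *m X *m x); split; last split.
  - exists (X *m x); split; last by rewrite mulmxA.
    exists (madj X *m X *m x).
    have eX : X = B *m madj X *m X by rewrite -hB -madjM h4 h2.
    by rewrite hB (mulmxA B (madj X *m X) x) (mulmxA B (madj X) X) -eX.
  - rewrite /null_of mulmxBr.
    have e : B *m (A *m X) = B by rewrite -h3 -hB -madjM h1.
    by rewrite !mulmxA -(mulmxA B A X) e subrr.
  - by rewrite addrC subrK.
move=> u [v [[w ->] ->]]; rewrite hB /null_of => hu.
have e : A *m (B *m w) = A *m X *m (A *m (B *m w)) by rewrite (mulmxA (A *m X) A) h1.
by rewrite e -h3 madjM hB -(mulmxA (madj X) B) hu mulmx0.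
Qed.

Lemma L43 : direct_sum_whole (image_of_range A) (null_of (madj A)) ->
  \rank (B *m A *m B) = \rank A.
Proof.
rewrite hB => -[hs _].
apply/eqP; rewrite eqn_leq; apply/andP; split.
  by rewrite -rankB; apply: leq_trans (mxrankM_maxl _ _) (mxrankM_maxl _ _).
rewrite -rankB -mxrank_tr -(mxrank_tr (B *m A *m B)); apply: mxrankS.
apply/row_subP => i; rewrite -tr_col colE.
have [u [v [[v' [[w ->] ->]] [hv ex]]]] := hs (delta_mx i 0).
have -> : B *m delta_mx i 0 = B *m A *m B *m w.
  by rewrite ex mulmxDr hv addr0 hB !mulmxA.
by rewrite trmx_mul submxMl.
Qed.

End Main.
End Gen.

Local Open Scope complex_scope.

Theorem theorem5p1 (R : realType) (m n : nat) (A : 'M[R[i]]_(m, n)) :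
  [<-> exists X : 'M[R[i]]_(n, m), is_minkowski_inverse A X;
       \rank (A *m madj A) = \rank A /\ \rank (madj A *m A) = \rank A;
       \rank (madj A *m A *m madj A) = \rank A;
       direct_sum_whole (image_of_range A) (null_of (madj A))].
Proof.
pose B := madj A.
have hB : madj A = B := erefl.
tfae; move=> h.
- exact: (L12 hB h).
- exact: (@L23 _ m n A B h).
- exact: (L14 hB (L21 hB (@L32 _ m n A B h))).
- exact: (L21 hB (@L32 _ m n A B (L43 hB h))).
Qed.
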